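(* Let $f\in\mathcal C$ be real-valued and let $P\Phi(x)=\lim_{k\to\infty}P_k\Phi(x)$. Then $P$ is a non-negative linear operator mapping $\mathcal C$ into $\mathcal C$, and it is continuous: $|P\Phi|_\infty\le e^{|f|_\infty}|\Phi|_\infty$ and there is a constant $c$ independent of $\Phi$ with $|P\Phi|_\beta\le c\|\Phi\|$ for all $\Phi\in\mathcal C$.
   Context: Let $I=[0,1)$ carry a metric $d_I$, fix $\theta\in(0,1)$, and let $\Omega=I^{\mathbb Z}$ with metric $d(x,y)=\sup_{k\in\mathbb Z}\theta^{|k|}d_I(x_k,y_k)$. Let $\tau:I\to I$ have full branches, so that $b=\#\tau^{-1}(t)$ is the same for every $t\in I$; let $p_\tau$ be a fixed point of $\tau$. Assume $\tau$ is expanding: there is $\eta\in(0,1)$ such that every inverse branch $\zeta$ of $\tau$ satisfies $d_I(\zeta(s),\zeta(t))\le\eta\,d_I(s,t)$. Let $\bar\tau:\Omega\to\Omega$, $(\bar\tau x)_i=\tau(x_i)$. For $k\ge0$ let $\Lambda_k=\{-k,\dots,k\}$ and let $\pi_k:\Omega\to\Omega$ be given by $(\pi_kx)_i=x_i$ for $|i|\le k$ and $(\pi_kx)_i=p_\tau$ for $|i|>k$. For $\Phi:\Omega\to\mathbb C$ put $\Phi_k=\Phi\circ\pi_k$. Fix $\beta\in(0,1]$; define $|\Phi|_\infty=\sup|\Phi|$, $|\Phi|_\beta=\sup_{k\in\mathbb N}\sup_{x\neq y}|\Phi_k(x)-\Phi_k(y)|/d(x,y)^\beta$, $\|\Phi\|=|\Phi|_\infty+|\Phi|_\beta$,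 and $\mathcal C=\{\Phi\in C(\Omega):\|\Phi\|<\infty\}$. An inverse branch of order $k$ is a choice $\zeta=(\zeta_j)_{|j|\le k}$ of inverse branches of $\tau$; for $x\in\Omega$, $\zeta_x$ is the point with $(\zeta_x)_j=\zeta_j(x_j)$ for $|j|\le k$ and $(\zeta_x)_j=x_j$ for $|j|>k$. There are $b_k=b^{2k+1}$ such branches; $\sum_{|\zeta|=k}$ denotes the sum over them. For a potential $f$, $P_k\Phi(x)=b_k^{-1}\sum_{|\zeta|=k}e^{f(\pi_k\zeta_x)}\Phi(\pi_k\zeta_x)$; the limit defining $P$ exists pointwise. *)

(* Defs.v *)
From Stdlib Require Import Reals Lra ZArith List ClassicalEpsilon.
Open Scope R_scope.

(** Complex numbers as pairs (real part, imaginary part). *)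
Definition Cx : Type := (R * R)%type.
Definition RtoC (r : R) : Cx := (r, 0).
Definition Cadd (z w : Cx) : Cx := (fst z + fst w, snd z + snd w).
Definition Csub (z w : Cx) : Cx := (fst z - fst w, snd z - snd w).
Definition Cmul (z w : Cx) : Cx :=
  (fst z * fst w - snd z * snd w, fst z * snd w + snd z * fst w).
Definition Cmod (z : Cx) : R := sqrt (fst z ^ 2 + snd z ^ 2).
Definition Csum (l : list Cx) : Cx := fold_right Cadd (0, 0) l.

(** Least upper bound of a set of reals (meaningful when it exists). *)
Definition supR (E : R -> Prop) : R := epsilon (inhabits 0) (fun l => is_lub E l).
Definition bounded_above (E : R -> Prop) : Prop := exists M, forall r, E r -> r <= M.

Definition powr (a e : R) : R := if Rle_dec a 0 then 0 else Rpower a e.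

Definition Iset : Type := {t : R | 0 <= t < 1}.
Definition Omega : Type := Z -> Iset.

Definition is_metric {X : Type} (d : X -> X -> R) : Prop :=
  (forall x y, 0 <= d x y) /\ (forall x y, d x y = 0 <-> x = y) /\
  (forall x y, d x y = d y x) /\ (forall x y z, d x z <= d x y + d y z).

Definition dOmega (dI : Iset -> Iset -> R) (theta : R) (x y : Omega) : R :=
  supR (fun r => exists k : Z, r = theta ^ (Z.abs_nat k) * dI (x k) (y k)).

Definition proj (p : Iset) (k : nat) (x : Omega) : Omega :=
  fun i => if (Z.abs i <=? Z.of_nat k)%Z then x i else p.

Definition supnorm (Phi : Omega -> Cx) : R := supR (fun r => exists x, r = Cmod (Phi x)).

Definition holder_quot_set (dI : Iset -> Iset -> R) (theta : R) (p : Iset) (beta : R)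
  (Phi : Omega -> Cx) : R -> Prop :=
  fun r => exists (k : nat) (x y : Omega), x <> y /\
    r = Cmod (Csub (Phi (proj p k x)) (Phi (proj p k y))) / powr (dOmega dI theta x y) beta.

Definition holder_semi dI theta p beta (Phi : Omega -> Cx) : R :=
  supR (holder_quot_set dI theta p beta Phi).

Definition normC dI theta p beta (Phi : Omega -> Cx) : R :=
  supnorm Phi + holder_semi dI theta p beta Phi.

Definition continuous_Omega (dI : Iset -> Iset -> R) (theta : R) (Phi : Omega -> Cx) : Prop :=
  forall x eps, 0 < eps -> exists delta, 0 < delta /\
    forall y, dOmega dI theta x y < delta -> Cmod (Csub (Phi y) (Phi x)) < eps.

Definition inC dI theta p beta (Phi : Omega -> Cx) : Prop :=
  continuous_Omega dI theta Phi /\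
  bounded_above (fun r => exists x, r = Cmod (Phi x)) /\
  bounded_above (holder_quot_set dI theta p beta Phi).

(** Inverse branches of order k: a choice c j in {0..b-1} of an inverse branch
    zeta (c j) for each j in Lambda_k. [choices b js] lists all such choices. *)
Fixpoint choices (b : nat) (js : list Z) : list (Z -> nat) :=
  match js with
  | nil => (fun _ => 0%nat) :: nil
  | j :: js' =>
      flat_map (fun c => map (fun i => fun z => if Z.eq_dec z j then i else c z) (seq 0 b))
               (choices b js')
  end.

Definition Lambda (k : nat) : list Z :=
  map (fun n => (Z.of_nat n - Z.of_nat k)%Z) (seq 0 (2 * k + 1)).

Definition apply_branch (zeta : nat -> Iset -> Iset) (k : nat) (c : Z -> nat) (x : Omega)
  : Omega :=
  fun j => if (Z.abs j <=? Z.of_nat k)%Z then zeta (c j) (x j) else x j.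

Definition Pk (b : nat) (zeta : nat -> Iset -> Iset) (p : Iset) (f : Omega -> R)
  (k : nat) (Phi : Omega -> Cx) (x : Omega) : Cx :=
  Cmul (RtoC (/ INR (b ^ (2 * k + 1))))
    (Csum (map (fun c => let y := proj p k (apply_branch zeta k c x) in
                         Cmul (RtoC (exp (f y))) (Phi y))
               (choices b (Lambda k)))).

Definition Ccv (u : nat -> Cx) (l : Cx) : Prop := Un_cv (fun n => Cmod (Csub (u n) l)) 0.

(* Main.v *)
Require Import Defs.
From Stdlib Require Import Reals ZArith List ClassicalEpsilon.
From Stdlib Require Import Lra FunctionalExtensionality Classical Lia.
From Coquelicot Require Complex.
Open Scope R_scope.

Lemma Cmod_tri z w : Cmod (Cadd z w) <= Cmod z + Cmod w.
Proof. exact (Complex.Cmod_triangle z w). Qed.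
Lemma Cmod_mul z w : Cmod (Cmul z w) = Cmod z * Cmod w.
Proof. exact (Complex.Cmod_mult z w). Qed.
Lemma Cmod_ge0 z : 0 <= Cmod z.
Proof. exact (Complex.Cmod_ge_0 z). Qed.
Lemma Cmod_RtoC r : Cmod (RtoC r) = Rabs r.
Proof. exact (Complex.Cmod_R r). Qed.
Lemma Csub_eq z w : Csub z w = Cadd z (Cmul (RtoC (-1)) w).
Proof. destruct z, w; unfold Csub, Cadd, Cmul, RtoC; simpl; f_equal; ring. Qed.
Lemma Cmod_sub_tri a b c : Cmod (Csub a c) <= Cmod (Csub a b) + Cmod (Csub b c).
Proof.
  replace (Csub a c) with (Cadd (Csub a b) (Csub b c)) by
   (destruct a, b, c; unfold Csub, Cadd; simpl; f_equal; ring).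
  apply Cmod_tri.
Qed.
Lemma Cmod_sub_sym a b : Cmod (Csub a b) = Cmod (Csub b a).
Proof.
  replace (Csub a b) with (Cmul (RtoC (-1)) (Csub b a)) by
   (destruct a, b; unfold Csub, Cmul, RtoC; simpl; f_equal; ring).
  rewrite Cmod_mul, Cmod_RtoC. replace (Rabs (-1)) with 1 by (unfold Rabs; destruct Rcase_abs; lra). ring.
Qed.
Lemma Cmod_sub_0 a b : Cmod (Csub a b) = 0 -> a = b.
Proof.
  intro H. apply (Complex.Cmod_eq_0 (Csub a b)) in H.
  destruct a, b; unfold Csub in H; simpl in H. injection H; intros.
  f_equal; lra.
Qed.
Lemma Cmod_self a : Cmod (Csub a a) = 0.
Proof. destruct a; unfold Cmod, Csub; simpl.
  rewrite <- sqrt_0; f_equal; ring. Qed.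
Lemma fst_le z : Rabs (fst z) <= Cmod z.
Proof. pose proof (Complex.Rmax_Cmod z). pose proof (Rmax_l (Rabs (fst z)) (Rabs (snd z))).
  change (Complex.Cmod z) with (Cmod z) in H. lra. Qed.
Lemma snd_le z : Rabs (snd z) <= Cmod z.
Proof. pose proof (Complex.Rmax_Cmod z). pose proof (Rmax_r (Rabs (fst z)) (Rabs (snd z))).
  change (Complex.Cmod z) with (Cmod z) in H. lra. Qed.

Lemma supR_lub E : bounded_above E -> (exists x, E x) -> is_lub E (supR E).
Proof.
  intros [M HM] Hne. unfold supR. apply epsilon_spec.
  destruct (completeness E) as [m Hm]; [exists M; exact HM | exact Hne | eauto].
Qed.
Lemma supR_ge E r : bounded_above E -> E r -> r <= supR E.
Proof. intros Hb Hr. apply (supR_lub E Hb (ex_intro _ r Hr)). exact Hr. Qed.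
Lemma supR_le E M : (exists x, E x) -> (forall r, E r -> r <= M) -> supR E <= M.
Proof. intros Hne HM. apply (supR_lub E (ex_intro _ M HM) Hne). exact HM. Qed.

Lemma pow_le_one t n : 0 <= t <= 1 -> t ^ n <= 1.
Proof. intro H. induction n; simpl; [lra|]. 
  replace 1 with (1*1) by ring. apply Rmult_le_compat; try lra. apply pow_le; lra. Qed.

Section D.
Variables (dI : Iset -> Iset -> R) (theta : R).
Hypothesis HdI : is_metric dI.
Hypothesis HdIbd : exists M, forall s t, dI s t <= M.
Hypothesis Htheta : 0 < theta < 1.

Lemma dI_ge0 s t : 0 <= dI s t.
Proof. apply HdI. Qed.

Lemma term_ge0 (x y : Omega) k : 0 <= theta ^ (Z.abs_nat k) * dI (x k) (y k).
Proof. apply Rmult_le_pos; [apply pow_le; lra | apply dI_ge0]. Qed.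

Lemma dset_bd x y : bounded_above (fun r => exists k : Z, r = theta ^ (Z.abs_nat k) * dI (x k) (y k)).
Proof.
  destruct HdIbd as [M HM]. exists M. intros r [k ->].
  replace M with (1 * M) by ring.
  apply Rmult_le_compat; [apply pow_le; lra | apply dI_ge0 | apply pow_le_one; lra | apply HM].
Qed.

Lemma d_ge x y k : theta ^ (Z.abs_nat k) * dI (x k) (y k) <= dOmega dI theta x y.
Proof. apply supR_ge; [apply dset_bd | eauto]. Qed.

Lemma d_le x y M : (forall k, theta ^ (Z.abs_nat k) * dI (x k) (y k) <= M) -> dOmega dI theta x y <= M.
Proof. intro H. apply supR_le; [exists (theta ^ (Z.abs_nat 0) * dI (x 0%Z) (y 0%Z)); eauto |].
  intros r [k ->]. apply H. Qed.

Lemma d_ge0 x y : 0 <= dOmega dI theta x y.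
Proof. eapply Rle_trans; [apply (term_ge0 x y 0%Z) | apply d_ge]. Qed.

Lemma d_pos x y : x <> y -> 0 < dOmega dI theta x y.
Proof.
  intro Hne. assert (exists k, x k <> y k) as [k Hk].
  { apply NNPP; intro H. apply Hne. apply functional_extensionality; intro k.
    apply NNPP; intro H'. apply H; eauto. }
  eapply Rlt_le_trans; [| apply (d_ge x y k)].
  apply Rmult_lt_0_compat; [apply pow_lt; lra|].
  destruct (dI_ge0 (x k) (y k)) as [H|H]; auto. exfalso; apply Hk; apply HdI; auto.
Qed.

Lemma d_sym x y : dOmega dI theta x y = dOmega dI theta y x.
Proof.
  apply Rle_antisym; apply d_le; intro k; destruct HdI as (_&_&Hs&_);
  rewrite Hs; apply d_ge.
Qed.

Lemma d_proj p m x y : dOmega dI theta (proj p m x) (proj p m y) <= dOmega dI theta x y.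
Proof.
  apply d_le; intro k. unfold proj. destruct (Z.abs k <=? Z.of_nat m)%Z.
  - apply d_ge.
  - destruct HdI as (_&Hz&_). replace (dI p p) with 0 by (symmetry; apply Hz; auto).
    rewrite Rmult_0_r. apply d_ge0.
Qed.

Lemma d_branch zeta b k c x y :
  (forall i s t, (i < b)%nat -> dI (zeta i s) (zeta i t) <= dI s t) ->
  (forall j, (Z.abs j <= Z.of_nat k)%Z -> (c j < b)%nat) ->
  dOmega dI theta (apply_branch zeta k c x) (apply_branch zeta k c y) <= dOmega dI theta x y.
Proof.
  intros Hz Hc. apply d_le; intro j. unfold apply_branch.
  destruct (Z.abs j <=? Z.of_nat k)%Z eqn:E.
  - eapply Rle_trans; [| apply (d_ge x y j)]. apply Rmult_le_compat_l; [apply pow_le; lra|].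
    apply Hz, Hc. apply Z.leb_le; auto.
  - apply d_ge.
Qed.
End D.

Lemma Cx_eq (z w : Cx) : fst z = fst w -> snd z = snd w -> z = w.
Proof. destruct z, w; simpl; intros; subst; auto. Qed.

Lemma choices_good b js c : In c (choices b js) -> forall j, In j js -> (c j < b)%nat.
Proof.
  revert c; induction js as [|j0 js IH]; simpl; intros c Hc j Hj; [contradiction|].
  apply in_flat_map in Hc as [c' [Hc' Hin]]. apply in_map_iff in Hin as [i [<- Hi]].
  apply in_seq in Hi. destruct (Z.eq_dec j j0); [lia|].
  destruct Hj as [Hj|Hj]; [congruence|]. apply IH; auto.
Qed.

Lemma Lambda_in k j : (Z.abs j <= Z.of_nat k)%Z -> In j (Lambda k).
Proof.
  intro H. unfold Lambda. apply in_map_iff. exists (Z.to_nat (j + Z.of_nat k)).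
  split; [lia|]. apply in_seq. lia.
Qed.

Lemma choices_len b js : length (choices b js) = (b ^ length js)%nat.
Proof.
  induction js as [|j0 js IH]; simpl; auto.
  rewrite <- IH. generalize (choices b js). intro l. induction l; simpl; [lia|].
  rewrite List.length_app, List.length_map, List.length_seq, IHl. lia.
Qed.

Lemma Lambda_len k : length (Lambda k) = (2 * k + 1)%nat.
Proof. unfold Lambda. rewrite List.length_map, List.length_seq. auto. Qed.

Lemma choices_ok b k c : In c (choices b (Lambda k)) ->
  forall j, (Z.abs j <= Z.of_nat k)%Z -> (c j < b)%nat.
Proof. intros H j Hj. eapply choices_good; eauto. apply Lambda_in; auto. Qed.

Lemma Csum_diff {T} (L : list T) g1 g2 B :
  (forall c, In c L -> Cmod (Csub (g1 c) (g2 c)) <= B) ->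
  Cmod (Csub (Csum (map g1 L)) (Csum (map g2 L))) <= INR (length L) * B.
Proof.
  induction L as [|a L IH]; intro H.
  - simpl. rewrite Cmod_self. lra.
  - change (length (a::L)) with (S (length L)); rewrite S_INR; simpl.
    replace (Csub (Cadd (g1 a) (Csum (map g1 L))) (Cadd (g2 a) (Csum (map g2 L))))
      with (Cadd (Csub (g1 a) (g2 a)) (Csub (Csum (map g1 L)) (Csum (map g2 L))))
      by (unfold Cadd, Csub; apply Cx_eq; simpl; ring).
    eapply Rle_trans; [apply Cmod_tri|].
    pose proof (H a (or_introl eq_refl)). pose proof (IH (fun c h => H c (or_intror h))). lra.
Qed.

Lemma Csum_bd {T} (L : list T) g B :
  (forall c, In c L -> Cmod (g c) <= B) ->
  Cmod (Csum (map g L)) <= INR (length L) * B.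
Proof.
  induction L as [|a L IH]; intro H.
  - simpl. replace (Cmod (0,0)) with 0. lra. unfold Cmod; simpl. rewrite <- sqrt_0 at 1; f_equal; ring.
  - change (length (a::L)) with (S (length L)); rewrite S_INR; simpl.
    eapply Rle_trans; [apply Cmod_tri|].
    pose proof (H a (or_introl eq_refl)). pose proof (IH (fun c h => H c (or_intror h))). lra.
Qed.

Lemma Cmod_inv_nat N : (0 < N)%nat -> Cmod (RtoC (/ INR N)) = / INR N.
Proof. intro. rewrite Cmod_RtoC. apply Rabs_right. apply Rle_ge, Rlt_le, Rinv_0_lt_compat, lt_0_INR; auto. Qed.

Lemma avg_diff {T} (N : nat) (L : list T) g1 g2 B : length L = N -> (0 < N)%nat ->
  (forall c, In c L -> Cmod (Csub (g1 c) (g2 c)) <= B) ->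
  Cmod (Csub (Cmul (RtoC (/ INR N)) (Csum (map g1 L))) (Cmul (RtoC (/ INR N)) (Csum (map g2 L)))) <= B.
Proof.
  intros HL HN H.
  replace (Csub (Cmul (RtoC (/ INR N)) (Csum (map g1 L))) (Cmul (RtoC (/ INR N)) (Csum (map g2 L))))
    with (Cmul (RtoC (/ INR N)) (Csub (Csum (map g1 L)) (Csum (map g2 L))))
    by (unfold Cmul, Csub, RtoC; apply Cx_eq; simpl; ring).
  rewrite Cmod_mul, Cmod_inv_nat by auto. pose proof (Csum_diff L g1 g2 B H). rewrite HL in H0.
  assert (0 < INR N) by (apply lt_0_INR; auto).
  apply Rmult_le_reg_l with (INR N); auto. rewrite <- Rmult_assoc, Rinv_r by lra. lra.
Qed.

Lemma avg_bd {T} (N : nat) (L : list T) g B : length L = N -> (0 < N)%nat ->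
  (forall c, In c L -> Cmod (g c) <= B) ->
  Cmod (Cmul (RtoC (/ INR N)) (Csum (map g L))) <= B.
Proof.
  intros HL HN H. rewrite Cmod_mul, Cmod_inv_nat by auto. pose proof (Csum_bd L g B H). rewrite HL in H0.
  assert (0 < INR N) by (apply lt_0_INR; auto).
  apply Rmult_le_reg_l with (INR N); auto. rewrite <- Rmult_assoc, Rinv_r by lra. lra.
Qed.

Lemma Csum_lin {T} (L : list T) (e : T -> Cx) u v a c :
  Csum (map (fun y => Cmul (e y) (Cadd (Cmul a (u y)) (Cmul c (v y)))) L) =
  Cadd (Cmul a (Csum (map (fun y => Cmul (e y) (u y)) L))) (Cmul c (Csum (map (fun y => Cmul (e y) (v y)) L))).
Proof.
  induction L as [|x L IH]; simpl.
  - unfold Cadd, Cmul; apply Cx_eq; simpl; ring.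
  - rewrite IH. unfold Cadd, Cmul; apply Cx_eq; simpl; ring.
Qed.

Lemma Pk_lin b zeta p f k Phi Psi a c x :
  Pk b zeta p f k (fun y => Cadd (Cmul a (Phi y)) (Cmul c (Psi y))) x =
  Cadd (Cmul a (Pk b zeta p f k Phi x)) (Cmul c (Pk b zeta p f k Psi x)).
Proof.
  unfold Pk.
  rewrite (Csum_lin _ (fun c0 => RtoC (exp (f (proj p k (apply_branch zeta k c0 x)))))
    (fun c0 => Phi (proj p k (apply_branch zeta k c0 x)))
    (fun c0 => Psi (proj p k (apply_branch zeta k c0 x))) a c).
  unfold Cadd, Cmul; apply Cx_eq; simpl; ring.
Qed.

Lemma Ccv_get u l eps : Ccv u l -> 0 < eps -> exists N, forall n, (n >= N)%nat -> Cmod (Csub (u n) l) < eps.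
Proof.
  intros H He. destruct (H eps He) as [N HN]. exists N. intros n Hn. specialize (HN n Hn).
  unfold R_dist in HN. rewrite Rminus_0_r, Rabs_right in HN; auto. apply Rle_ge, Cmod_ge0.
Qed.

Lemma Ccv_diff_bd u v l m B : Ccv u l -> Ccv v m -> (forall k, Cmod (Csub (u k) (v k)) <= B) ->
  Cmod (Csub l m) <= B.
Proof.
  intros Hu Hv HB. apply Rnot_lt_le; intro Hlt.
  set (eps := (Cmod (Csub l m) - B) / 2).
  destruct (Ccv_get u l eps Hu) as [N1 H1]; [unfold eps; lra|].
  destruct (Ccv_get v m eps Hv) as [N2 H2]; [unfold eps; lra|].
  specialize (H1 (max N1 N2) ltac:(lia)). specialize (H2 (max N1 N2) ltac:(lia)).
  specialize (HB (max N1 N2)).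
  pose proof (Cmod_sub_tri l (u (max N1 N2)) m).
  pose proof (Cmod_sub_tri (u (max N1 N2)) (v (max N1 N2)) m).
  rewrite Cmod_sub_sym in H1. unfold eps in *. lra.
Qed.

Lemma Ccv_unique u l m : Ccv u l -> Ccv u m -> l = m.
Proof.
  intros H1 H2. apply Cmod_sub_0. apply Rle_antisym; [|apply Cmod_ge0].
  apply (Ccv_diff_bd u u); auto. intro k. rewrite Cmod_self. lra.
Qed.

Lemma Cmod_le_sub l w : Cmod l <= Cmod (Csub l w) + Cmod w.
Proof.
  replace l with (Cadd (Csub l w) w) at 1 by (unfold Cadd, Csub; apply Cx_eq; simpl; ring).
  apply Cmod_tri.
Qed.

Lemma Ccv_bd u l B : Ccv u l -> (forall k, Cmod (u k) <= B) -> Cmod l <= B.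
Proof.
  intros Hu HB. apply Rnot_lt_le; intro Hlt.
  destruct (Ccv_get u l ((Cmod l - B)/2) Hu) as [N1 H1]; [lra|].
  specialize (H1 N1 ltac:(lia)). pose proof (Cmod_le_sub l (u N1)). rewrite Cmod_sub_sym in H1.
  specialize (HB N1). lra.
Qed.

Lemma Ccv_realnn u l : Ccv u l -> (forall k, snd (u k) = 0 /\ 0 <= fst (u k)) -> snd l = 0 /\ 0 <= fst l.
Proof.
  intros Hu HR. split.
  - apply NNPP; intro Hne. assert (0 < Rabs (snd l)) by (apply Rabs_pos_lt; auto).
    destruct (Ccv_get u l (Rabs (snd l)) Hu) as [N H1]; auto. specialize (H1 N ltac:(lia)).
    pose proof (snd_le (Csub (u N) l)). simpl in H0. destruct (HR N) as [H2 _]. rewrite H2 in H0.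
    replace (0 - snd l) with (- snd l) in H0 by ring. rewrite Rabs_Ropp in H0. lra.
  - apply Rnot_lt_le; intro Hlt.
    destruct (Ccv_get u l (- fst l) Hu) as [N H1]; [lra|]. specialize (H1 N ltac:(lia)).
    pose proof (fst_le (Csub (u N) l)). simpl in H. destruct (HR N) as [_ H2].
    pose proof (Rle_abs (fst (u N) - fst l)). lra.
Qed.

Lemma Ccv_lin u v l m a c : Ccv u l -> Ccv v m ->
  Ccv (fun k => Cadd (Cmul a (u k)) (Cmul c (v k))) (Cadd (Cmul a l) (Cmul c m)).
Proof.
  intros Hu Hv eps He.
  set (K := Cmod a + Cmod c + 1).
  assert (HK : 0 < K) by (unfold K; pose proof (Cmod_ge0 a); pose proof (Cmod_ge0 c); lra).
  destruct (Ccv_get u l (eps / K) Hu) as [N1 H1]; [apply Rdiv_lt_0_compat; auto|].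
  destruct (Ccv_get v m (eps / K) Hv) as [N2 H2]; [apply Rdiv_lt_0_compat; auto|].
  exists (max N1 N2). intros n Hn. unfold R_dist. rewrite Rminus_0_r, Rabs_right by (apply Rle_ge, Cmod_ge0).
  specialize (H1 n ltac:(lia)). specialize (H2 n ltac:(lia)).
  replace (Csub (Cadd (Cmul a (u n)) (Cmul c (v n))) (Cadd (Cmul a l) (Cmul c m)))
    with (Cadd (Cmul a (Csub (u n) l)) (Cmul c (Csub (v n) m)))
    by (unfold Cadd, Csub, Cmul; apply Cx_eq; simpl; ring).
  eapply Rle_lt_trans; [apply Cmod_tri|]. rewrite !Cmod_mul.
  pose proof (Cmod_ge0 a). pose proof (Cmod_ge0 c).
  apply Rle_lt_trans with (Cmod a * (eps / K) + Cmod c * (eps / K)).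
  - apply Rplus_le_compat; apply Rmult_le_compat_l; lra.
  - replace (Cmod a * (eps / K) + Cmod c * (eps / K)) with (eps * ((Cmod a + Cmod c) / K)) by (field; lra).
    rewrite <- (Rmult_1_r eps) at 2. apply Rmult_lt_compat_l; auto.
    apply Rmult_lt_reg_r with K; auto. unfold Rdiv. rewrite Rmult_assoc, Rinv_l by lra. unfold K; lra.
Qed.

Lemma exp_le x y : x <= y -> exp x <= exp y.
Proof. intros [H|H]; [apply Rlt_le, exp_increasing; auto | subst; lra]. Qed.

Lemma exp_lip s t F : s <= F -> t <= F -> Rabs (exp s - exp t) <= exp F * Rabs (s - t).
Proof.
  assert (G : forall s t, t <= s -> s <= F -> Rabs (exp s - exp t) <= exp F * Rabs (s - t)).
  { intros s0 t0 Hts HF. pose proof (exp_ineq1_le (t0 - s0)).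
    replace (exp t0) with (exp s0 * exp (t0 - s0)) by (rewrite <- exp_plus; f_equal; ring).
    pose proof (exp_pos s0). pose proof (exp_le _ _ HF).
    assert (exp s0 * (1 + (t0 - s0)) <= exp s0 * exp (t0 - s0)) by (apply Rmult_le_compat_l; lra).
    assert (exp s0 * exp (t0 - s0) <= exp s0) by (rewrite <- exp_plus; apply exp_le; lra).
    rewrite (Rabs_right (s0 - t0)) by lra. rewrite Rabs_right by lra.
    apply Rle_trans with (exp s0 * (s0 - t0)); [nra|]. apply Rmult_le_compat_r; lra. }
  intros Hs Ht. destruct (Rle_dec t s); [apply G; auto|].
  rewrite Rabs_minus_sym, (Rabs_minus_sym s). apply G; auto; lra.
Qed.

Lemma powr_ge0 a e : 0 <= powr a e.
Proof. unfold powr. destruct (Rle_dec a 0); [lra|]. unfold Rpower. apply Rlt_le, exp_pos. Qed.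
Lemma powr_pos a e : 0 < a -> 0 < powr a e.
Proof. intro. unfold powr. destruct (Rle_dec a 0); [lra|]. unfold Rpower. apply exp_pos. Qed.
Lemma powr_mono a c e : 0 <= e -> a <= c -> powr a e <= powr c e.
Proof.
  intros He Hac. unfold powr at 1. destruct (Rle_dec a 0). apply powr_ge0.
  unfold powr. destruct (Rle_dec c 0); [lra|]. apply Rle_Rpower_l; lra.
Qed.

Lemma Cmod_RtoC_sub a c : Cmod (Csub (RtoC a) (RtoC c)) = Rabs (a - c).
Proof. rewrite <- Cmod_RtoC. unfold Cmod, Csub, RtoC; simpl. f_equal; ring. Qed.

Lemma Omega_two : exists x y : Omega, x <> y.
Proof.
  assert (H0 : 0 <= 0 < 1) by lra. assert (H1 : 0 <= 1/2 < 1) by lra.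
  exists (fun _ => exist _ 0 H0), (fun _ => exist _ (1/2) H1). intro H.
  apply (f_equal (fun g => proj1_sig (g 0%Z))) in H. simpl in H. lra.
Qed.

Section E.
Variables (dI : Iset -> Iset -> R) (theta beta : R) (p : Iset).
Hypothesis HdI : is_metric dI.
Hypothesis HdIbd : exists M, forall s t, dI s t <= M.
Hypothesis Htheta : 0 < theta < 1.
Hypothesis Hbeta : 0 < beta <= 1.

Notation inC' := (inC dI theta p beta).
Notation H := (holder_semi dI theta p beta).
Notation d := (dOmega dI theta).

Lemma S_ge Phi x : inC' Phi -> Cmod (Phi x) <= supnorm Phi.
Proof. intros (_&Hb&_). apply supR_ge; eauto. Qed.

Lemma S_ge0 Phi : inC' Phi -> 0 <= supnorm Phi.
Proof. intro Hc. eapply Rle_trans; [apply (Cmod_ge0 (Phi (fun _ => p)))|]; apply S_ge; auto. Qed.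

Lemma quot_ge0 Phi k x y : x <> y ->
  0 <= Cmod (Csub (Phi (proj p k x)) (Phi (proj p k y))) / powr (d x y) beta.
Proof.
  intro Hne. apply Rmult_le_pos; [apply Cmod_ge0|]. apply Rlt_le, Rinv_0_lt_compat, powr_pos.
  apply d_pos; auto.
Qed.

Lemma H_ge0 Phi : inC' Phi -> 0 <= H Phi.
Proof.
  intros (_&_&Hb). destruct Omega_two as [x [y Hxy]].
  eapply Rle_trans; [apply (quot_ge0 Phi 0%nat x y Hxy)|].
  apply supR_ge; auto. exists 0%nat, x, y; auto.
Qed.

Lemma H_quot Phi k A B : inC' Phi ->
  Cmod (Csub (Phi (proj p k A)) (Phi (proj p k B))) <= H Phi * powr (d A B) beta.
Proof.
  intro Hc. destruct (classic (A = B)) as [<-|Hne].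
  - rewrite Cmod_self. apply Rmult_le_pos; [apply H_ge0; auto | apply powr_ge0].
  - assert (Hp : 0 < powr (d A B) beta) by (apply powr_pos, d_pos; auto).
    destruct Hc as (_&_&Hb).
    assert (Hq : Cmod (Csub (Phi (proj p k A)) (Phi (proj p k B))) / powr (d A B) beta <= H Phi).
    { apply supR_ge; auto. exists k, A, B; auto. }
    apply Rmult_le_reg_r with (/ powr (d A B) beta); [apply Rinv_0_lt_compat; auto|].
    rewrite Rmult_assoc, Rinv_r by lra. rewrite Rmult_1_r. exact Hq.
Qed.

Lemma H_le Phi K : inC' Phi -> 0 <= K ->
  (forall k A B, Cmod (Csub (Phi (proj p k A)) (Phi (proj p k B))) <= K * powr (d A B) beta) ->
  H Phi <= K.
Proof.
  intros _ HK HB. apply supR_le.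
  - destruct Omega_two as [x [y Hxy]]. exists (Cmod (Csub (Phi (proj p 0 x)) (Phi (proj p 0 y))) / powr (d x y) beta).
    exists 0%nat, x, y; auto.
  - intros r (k & A & B & Hne & ->). assert (Hp : 0 < powr (d A B) beta) by (apply powr_pos, d_pos; auto).
    apply Rmult_le_reg_r with (powr (d A B) beta); auto. unfold Rdiv. rewrite Rmult_assoc, Rinv_l by lra.
    rewrite Rmult_1_r. apply HB.
Qed.

Lemma bd_holder Phi K : 0 <= K ->
  (forall k A B, Cmod (Csub (Phi (proj p k A)) (Phi (proj p k B))) <= K * powr (d A B) beta) ->
  bounded_above (holder_quot_set dI theta p beta Phi).
Proof.
  intros HK HB. exists K. intros r (k & A & B & Hne & ->). assert (Hp : 0 < powr (d A B) beta) by (apply powr_pos, d_pos; auto).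
    apply Rmult_le_reg_r with (powr (d A B) beta); auto. unfold Rdiv. rewrite Rmult_assoc, Rinv_l by lra.
    rewrite Rmult_1_r. apply HB.
Qed.

Lemma cont_of_bd Phi K : 0 <= K -> (forall x y, Cmod (Csub (Phi y) (Phi x)) <= K * powr (d x y) beta) ->
  continuous_Omega dI theta Phi.
Proof.
  intros HK HB x eps He. set (e1 := eps / (K + 1)).
  assert (He1 : 0 < e1) by (apply Rdiv_lt_0_compat; lra).
  exists (Rpower e1 (/ beta)). split; [unfold Rpower; apply exp_pos|].
  intros y Hy. eapply Rle_lt_trans; [apply HB|].
  assert (Hpw : powr (d x y) beta <= e1).
  { unfold powr. destruct (Rle_dec (d x y) 0); [lra|].
    replace e1 with (Rpower (Rpower e1 (/ beta)) beta).
    - apply Rlt_le, Rlt_Rpower_l; lra.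
    - rewrite Rpower_mult, Rinv_l, Rpower_1; auto; lra. }
  apply Rle_lt_trans with (K * e1); [apply Rmult_le_compat_l; auto|].
  unfold e1. replace (K * (eps / (K + 1))) with (eps * (K / (K+1))) by (field; lra).
  rewrite <- (Rmult_1_r eps) at 2. apply Rmult_lt_compat_l; auto.
  apply Rmult_lt_reg_r with (K+1); [lra|]. unfold Rdiv; rewrite Rmult_assoc, Rinv_l; lra.
Qed.
End E.

Lemma Cmod_lin_le a c z w : Cmod (Cadd (Cmul a z) (Cmul c w)) <= Cmod a * Cmod z + Cmod c * Cmod w.
Proof. eapply Rle_trans; [apply Cmod_tri|]. rewrite !Cmod_mul. lra. Qed.

Lemma Csub_lin a c z1 z2 w1 w2 :
  Csub (Cadd (Cmul a z1) (Cmul c w1)) (Cadd (Cmul a z2) (Cmul c w2)) =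
  Cadd (Cmul a (Csub z1 z2)) (Cmul c (Csub w1 w2)).
Proof. unfold Cadd, Csub, Cmul; apply Cx_eq; simpl; ring. Qed.

Lemma Csum_rnn {T} (L : list T) g : (forall c, In c L -> snd (g c) = 0 /\ 0 <= fst (g c)) ->
  snd (Csum (map g L)) = 0 /\ 0 <= fst (Csum (map g L)).
Proof.
  induction L as [|a L IH]; simpl; intro Hg; [lra|].
  destruct (Hg a (or_introl eq_refl)). destruct (IH (fun c h => Hg c (or_intror h))).
  unfold Cadd; simpl. lra.
Qed.

Lemma Ccv_ext u v l : (forall k, u k = v k) -> Ccv u l -> Ccv v l.
Proof. intros E Hu eps He. destruct (Hu eps He) as [N HN]. exists N. intros n Hn. rewrite <- E. auto. Qed.

Section F.
Variables (dI : Iset -> Iset -> R) (theta beta : R) (p : Iset).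
Hypothesis HdI : is_metric dI.
Hypothesis HdIbd : exists M, forall s t, dI s t <= M.
Hypothesis Htheta : 0 < theta < 1.
Hypothesis Hbeta : 0 < beta <= 1.
Variables (b : nat) (zeta : nat -> Iset -> Iset) (f : Omega -> R).
Hypothesis Hb : (0 < b)%nat.
Hypothesis Hz : forall i s t, (i < b)%nat -> dI (zeta i s) (zeta i t) <= dI s t.
Hypothesis Hf : inC dI theta p beta (fun x => RtoC (f x)).

Notation inC' := (inC dI theta p beta).
Notation Hs := (holder_semi dI theta p beta).
Notation d := (dOmega dI theta).
Notation fC := (fun x => RtoC (f x)).
Notation F := (supnorm fC).

Lemma f_le_F y : f y <= F.
Proof. eapply Rle_trans; [apply Rle_abs|]. rewrite <- Cmod_RtoC. apply (S_ge dI theta beta p fC y Hf). Qed.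

Definition Kc (Phi : Omega -> Cx) := exp F * (Hs Phi + Hs fC * supnorm Phi).

Lemma Kc_ge0 Phi : inC' Phi -> 0 <= Kc Phi.
Proof.
  intro Hc. unfold Kc. pose proof (exp_pos F). pose proof (H_ge0 dI theta beta p HdI HdIbd Htheta Phi Hc).
  pose proof (H_ge0 dI theta beta p HdI HdIbd Htheta fC Hf). pose proof (S_ge0 dI theta beta p Phi Hc).
  apply Rmult_le_pos; [lra|]. nra.
Qed.

Lemma term_bound Phi k A B : inC' Phi ->
  Cmod (Csub (Cmul (RtoC (exp (f (proj p k A)))) (Phi (proj p k A)))
             (Cmul (RtoC (exp (f (proj p k B)))) (Phi (proj p k B)))) <= Kc Phi * powr (d A B) beta.
Proof.
  intro Hc. set (a := proj p k A). set (c := proj p k B).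
  replace (Csub (Cmul (RtoC (exp (f a))) (Phi a)) (Cmul (RtoC (exp (f c))) (Phi c)))
    with (Cadd (Cmul (RtoC (exp (f a))) (Csub (Phi a) (Phi c))) (Cmul (RtoC (exp (f a) - exp (f c))) (Phi c)))
    by (unfold Cadd, Csub, Cmul, RtoC; apply Cx_eq; simpl; ring).
  eapply Rle_trans; [apply Cmod_lin_le|]. rewrite !Cmod_RtoC.
  pose proof (H_quot dI theta beta p HdI HdIbd Htheta Phi k A B Hc) as H1.
  pose proof (H_quot dI theta beta p HdI HdIbd Htheta fC k A B Hf) as H2.
  cbv beta in H2. fold a c in H1, H2. rewrite Cmod_RtoC_sub in H2.
  pose proof (exp_lip (f a) (f c) F (f_le_F a) (f_le_F c)) as H3.
  pose proof (S_ge dI theta beta p Phi c Hc) as H4.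
  pose proof (exp_le _ _ (f_le_F a)) as H5.
  rewrite (Rabs_right (exp (f a))) by (apply Rle_ge, Rlt_le, exp_pos).
  set (pw := powr (d A B) beta) in *. pose proof (powr_ge0 (d A B) beta). fold pw in H.
  pose proof (exp_pos F). pose proof (exp_pos (f a)). pose proof (Cmod_ge0 (Phi c)).
  pose proof (Cmod_ge0 (Csub (Phi a) (Phi c))). pose proof (Rabs_pos (f a - f c)).
  pose proof (H_ge0 dI theta beta p HdI HdIbd Htheta Phi Hc).
  pose proof (H_ge0 dI theta beta p HdI HdIbd Htheta fC Hf).
  unfold Kc.
  apply Rle_trans with (exp F * (Hs Phi * pw) + exp F * (Hs fC * pw) * supnorm Phi).
  - apply Rplus_le_compat.
    + apply Rle_trans with (exp F * Cmod (Csub (Phi a) (Phi c))); [apply Rmult_le_compat_r; lra|].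
      apply Rmult_le_compat_l; lra.
    + apply Rle_trans with (exp F * Rabs (f a - f c) * Cmod (Phi c)); [apply Rmult_le_compat_r; lra|].
      apply Rmult_le_compat; [nra | lra | apply Rmult_le_compat_l; lra | lra].
  - apply Req_le; ring.
Qed.

Lemma len_ok k : length (choices b (Lambda k)) = (b ^ (2 * k + 1))%nat.
Proof. rewrite choices_len, Lambda_len. auto. Qed.
Lemma N_pos k : (0 < b ^ (2 * k + 1))%nat.
Proof. apply Nat.neq_0_lt_0, Nat.pow_nonzero; lia. Qed.

Lemma Pk_diff Phi k x y : inC' Phi ->
  Cmod (Csub (Pk b zeta p f k Phi x) (Pk b zeta p f k Phi y)) <= Kc Phi * powr (d x y) beta.
Proof.
  intro Hc. unfold Pk. apply avg_diff; [apply len_ok | apply N_pos |].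
  intros c Hcin. cbv beta zeta.
  eapply Rle_trans; [apply term_bound; auto|]. apply Rmult_le_compat_l; [apply Kc_ge0; auto|].
  apply powr_mono; [lra|]. apply d_branch with (b := b); auto. apply choices_ok; auto.
Qed.

Lemma Pk_bd Phi k x : inC' Phi -> Cmod (Pk b zeta p f k Phi x) <= exp F * supnorm Phi.
Proof.
  intro Hc. unfold Pk. apply avg_bd; [apply len_ok | apply N_pos |].
  intros c Hcin. cbv beta zeta. rewrite Cmod_mul, Cmod_RtoC, Rabs_right by (apply Rle_ge, Rlt_le, exp_pos).
  apply Rmult_le_compat; [apply Rlt_le, exp_pos | apply Cmod_ge0 | apply exp_le, f_le_F | apply (S_ge dI theta beta p); auto].
Qed.

Lemma Pk_rnn Phi k x : (forall y, snd (Phi y) = 0 /\ 0 <= fst (Phi y)) ->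
  snd (Pk b zeta p f k Phi x) = 0 /\ 0 <= fst (Pk b zeta p f k Phi x).
Proof.
  intro HR. unfold Pk. cbv beta zeta.
  match goal with |- context [Csum ?s] => assert (Hs' : snd (Csum s) = 0 /\ 0 <= fst (Csum s)) end.
  { apply Csum_rnn. intros c _. cbv beta zeta. destruct (HR (proj p k (apply_branch zeta k c x))).
    unfold Cmul, RtoC; simpl. pose proof (exp_pos (f (proj p k (apply_branch zeta k c x)))). split; [rewrite H; ring| nra]. }
  destruct Hs' as [H1 H2]. revert H1 H2. match goal with |- context [Csum ?l] => generalize (Csum l) end. intros s H1 H2. unfold Cmul, RtoC; simpl. rewrite H1.
  assert (0 < / INR (b ^ (2 * k + 1))) by (apply Rinv_0_lt_compat, lt_0_INR, N_pos).
  split; [ring | ]. replace (k + (k + 0) + 1)%nat with (2 * k + 1)%nat by lia. pose proof (Rmult_le_pos _ _ (Rlt_le _ _ H) H2). lra.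
Qed.

Lemma inC_lin a c Phi Psi : inC' Phi -> inC' Psi -> inC' (fun y => Cadd (Cmul a (Phi y)) (Cmul c (Psi y))).
Proof.
  intros H1 H2. pose proof (Cmod_ge0 a). pose proof (Cmod_ge0 c).
  split; [|split].
  - destruct H1 as (C1&_&_); destruct H2 as (C2&_&_).
    intros x eps He. set (K := Cmod a + Cmod c + 1). assert (HK : 0 < K) by (unfold K; lra).
    destruct (C1 x (eps / K)) as [d1 [Hd1 E1]]; [apply Rdiv_lt_0_compat; auto|].
    destruct (C2 x (eps / K)) as [d2 [Hd2 E2]]; [apply Rdiv_lt_0_compat; auto|].
    exists (Rmin d1 d2). split; [apply Rmin_glb_lt; auto|]. intros y Hy.
    specialize (E1 y (Rlt_le_trans _ _ _ Hy (Rmin_l _ _))). specialize (E2 y (Rlt_le_trans _ _ _ Hy (Rmin_r _ _))).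
    rewrite Csub_lin. eapply Rle_lt_trans; [apply Cmod_lin_le|].
    apply Rle_lt_trans with (Cmod a * (eps / K) + Cmod c * (eps / K)).
    + apply Rplus_le_compat; apply Rmult_le_compat_l; lra.
    + replace (Cmod a * (eps / K) + Cmod c * (eps / K)) with (eps * ((Cmod a + Cmod c) / K)) by (field; lra).
      rewrite <- (Rmult_1_r eps) at 2. apply Rmult_lt_compat_l; auto.
      apply Rmult_lt_reg_r with K; auto. unfold Rdiv. rewrite Rmult_assoc, Rinv_l by lra. unfold K; lra.
  - exists (Cmod a * supnorm Phi + Cmod c * supnorm Psi). intros r [x ->].
    eapply Rle_trans; [apply Cmod_lin_le|].
    pose proof (S_ge dI theta beta p Phi x H1). pose proof (S_ge dI theta beta p Psi x H2).
    apply Rplus_le_compat; apply Rmult_le_compat_l; lra.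
  - apply (bd_holder dI theta beta p HdI HdIbd Htheta _ (Cmod a * Hs Phi + Cmod c * Hs Psi)).
    + pose proof (H_ge0 dI theta beta p HdI HdIbd Htheta Phi H1). pose proof (H_ge0 dI theta beta p HdI HdIbd Htheta Psi H2). nra.
    + intros k A B. rewrite Csub_lin. eapply Rle_trans; [apply Cmod_lin_le|].
      pose proof (H_quot dI theta beta p HdI HdIbd Htheta Phi k A B H1).
      pose proof (H_quot dI theta beta p HdI HdIbd Htheta Psi k A B H2).
      rewrite Rmult_plus_distr_r, !Rmult_assoc. apply Rplus_le_compat; apply Rmult_le_compat_l; lra.
Qed.
End F.

Theorem mainTheorem2
  (dI : Iset -> Iset -> R) (theta beta : R)
  (tau : Iset -> Iset) (b : nat) (zeta : nat -> Iset -> Iset) (p : Iset)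
  (f : Omega -> R) (P : (Omega -> Cx) -> (Omega -> Cx))
  (HdI : is_metric dI)
  (HdIbd : exists M, forall s t, dI s t <= M)
  (Htheta : 0 < theta < 1)
  (Hbeta : 0 < beta <= 1)
  (Hbranch : forall i t, (i < b)%nat -> tau (zeta i t) = t)
  (Hbranch_all : forall t s, tau s = t -> exists i, (i < b)%nat /\ s = zeta i t)
  (Hbranch_inj : forall t i j, (i < b)%nat -> (j < b)%nat -> zeta i t = zeta j t -> i = j)
  (Hfix : tau p = p)
  (Hexp : exists eta, 0 < eta < 1 /\
     forall i s t, (i < b)%nat -> dI (zeta i s) (zeta i t) <= eta * dI s t)
  (Hf : inC dI theta p beta (fun x => RtoC (f x)))
  (HP : forall Phi, inC dI theta p beta Phi ->
          forall x, Ccv (fun k => Pk b zeta p f k Phi x) (P Phi x)) :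
  (forall Phi, inC dI theta p beta Phi -> inC dI theta p beta (P Phi)) /\
  (forall (a c : Cx) Phi Psi, inC dI theta p beta Phi -> inC dI theta p beta Psi ->
     forall x, P (fun y => Cadd (Cmul a (Phi y)) (Cmul c (Psi y))) x
               = Cadd (Cmul a (P Phi x)) (Cmul c (P Psi x))) /\
  (forall Phi, inC dI theta p beta Phi ->
     (forall x, snd (Phi x) = 0 /\ 0 <= fst (Phi x)) ->
     forall x, snd (P Phi x) = 0 /\ 0 <= fst (P Phi x)) /\
  (forall Phi, inC dI theta p beta Phi ->
     supnorm (P Phi) <= exp (supnorm (fun x => RtoC (f x))) * supnorm Phi) /\
  (exists c : R, forall Phi, inC dI theta p beta Phi ->
     holder_semi dI theta p beta (P Phi) <= c * normC dI theta p beta Phi).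
Proof.
  assert (Hb : (0 < b)%nat).
  { destruct (Hbranch_all p p Hfix) as [i [Hi _]]. lia. }
  assert (Hz : forall i s t, (i < b)%nat -> dI (zeta i s) (zeta i t) <= dI s t).
  { destruct Hexp as [eta [Heta Hd]]. intros i s t Hi. specialize (Hd i s t Hi).
    pose proof (dI_ge0 dI HdI s t). nra. }
  set (F := supnorm (fun x => RtoC (f x))).
  assert (PD : forall Phi, inC dI theta p beta Phi -> forall x y,
    Cmod (Csub (P Phi x) (P Phi y)) <= Kc dI theta beta p f Phi * powr (dOmega dI theta x y) beta).
  { intros Phi Hc x y. apply (Ccv_diff_bd _ _ _ _ _ (HP Phi Hc x) (HP Phi Hc y)).
    intro k. apply (Pk_diff dI theta beta p HdI HdIbd Htheta Hbeta b zeta f Hb Hz Hf); auto. }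
  assert (PB : forall Phi, inC dI theta p beta Phi -> forall x, Cmod (P Phi x) <= exp F * supnorm Phi).
  { intros Phi Hc x. apply (Ccv_bd _ _ _ (HP Phi Hc x)). intro k.
    apply (Pk_bd dI theta beta p b zeta f Hb Hf); auto. }
  assert (PH : forall Phi, inC dI theta p beta Phi -> forall k A B,
    Cmod (Csub (P Phi (proj p k A)) (P Phi (proj p k B))) <= Kc dI theta beta p f Phi * powr (dOmega dI theta A B) beta).
  { intros Phi Hc k A B. eapply Rle_trans; [apply PD; auto|].
    apply Rmult_le_compat_l; [apply (Kc_ge0 dI theta beta p HdI HdIbd Htheta f Hf); auto|].
    apply powr_mono; [lra|]. apply (d_proj dI theta HdI HdIbd Htheta). }
  assert (PC : forall Phi, inC dI theta p beta Phi -> inC dI theta p beta (P Phi)).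
  { intros Phi Hc. pose proof (Kc_ge0 dI theta beta p HdI HdIbd Htheta f Hf Phi Hc) as HK.
    split; [|split].
    - apply (cont_of_bd dI theta beta Htheta Hbeta _ _ HK). intros x y.
      rewrite (d_sym dI theta HdI HdIbd Htheta). apply PD; auto.
    - exists (exp F * supnorm Phi). intros r [x ->]. apply PB; auto.
    - apply (bd_holder dI theta beta p HdI HdIbd Htheta _ _ HK). apply PH; auto. }
  split; [exact PC|]. split; [|split; [|split]].
  - intros a c Phi Psi H1 H2 x.
    pose proof (inC_lin dI theta beta p HdI HdIbd Htheta a c Phi Psi H1 H2) as Hl.
    apply (Ccv_unique (fun k => Pk b zeta p f k (fun y => Cadd (Cmul a (Phi y)) (Cmul c (Psi y))) x)).
    + apply HP; auto.
    + eapply Ccv_ext; [| apply (Ccv_lin _ _ _ _ a c (HP Phi H1 x) (HP Psi H2 x))].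
      intro k. simpl. rewrite Pk_lin. auto.
  - intros Phi Hc HR x. apply (Ccv_realnn _ _ (HP Phi Hc x)). intro k.
    apply (Pk_rnn p b zeta f Hb); auto.
  - intros Phi Hc. apply supR_le; [exists (Cmod (P Phi (fun _ => p))), (fun _ => p); auto|]. intros r [x ->]. apply PB; auto.
  - exists (exp F * (1 + holder_semi dI theta p beta (fun x => RtoC (f x)))).
    intros Phi Hc. apply Rle_trans with (Kc dI theta beta p f Phi).
    + apply (H_le dI theta beta p HdI HdIbd Htheta (P Phi) (Kc dI theta beta p f Phi));
      [apply PC; auto | apply (Kc_ge0 dI theta beta p HdI HdIbd Htheta f Hf); auto | apply PH; auto].
    + unfold Kc, normC. fold F.
      pose proof (exp_pos F). pose proof (H_ge0 dI theta beta p HdI HdIbd Htheta Phi Hc).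
      pose proof (H_ge0 dI theta beta p HdI HdIbd Htheta _ Hf). pose proof (S_ge0 dI theta beta p Phi Hc).
      set (h := holder_semi dI theta p beta (fun x => RtoC (f x))) in *.
      set (hp := holder_semi dI theta p beta Phi) in *. set (s := supnorm Phi) in *.
      assert (0 <= exp F * (s + h * hp)) by (apply Rmult_le_pos; nra).
      nra.
Qed.
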